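(* For every sequence $(k_n)_{n\ge 2}$ with $k_n\in\{2,\dots,n\}$ and $k_n\to\infty$, there exist probability distributions $P,Q$ on $\mathbb{R}$ (not depending on $n$), each absolutely continuous with respect to the other, such that the optimal risk $R(T^* )$ in the weighted hidden clique problem with parameters $n,k_n,P,Q$ satisfies $R(T^* )\to 0$ as $n\to\infty$.
   Context: Weighted hidden clique model. For $n\ge 2$ and $k\in\{2,\dots,n\}$, let $E=\{(i,j):1\le i<j\le n\}$ and for $S\subseteq[n]$ let $E(S)=\{(i,j):i,j\in S,\ i<j\}$. The observation is $\mathbf{X}=(X_e)_{e\in E}$. Under $\mathcal{H}_0$ (law $\mathbb{P}_0$) the $X_e$ are i.i.d. $P$. Under $\mathcal{H}_1$ (law $\mathbb{P}_1$) a uniformly random $k$-subset $S^*\subseteq[n]$ is chosen and, conditionally on $S^*$, the $X_e$ are independent with $X_e\sim Q$ for $e\in E(S^* )$ and $X_e\sim P$ otherwise. The risk of a test $T:\mathbb{R}^{\binom n2}\to\{0,1\}$ is $R(T)=\mathbb{P}_0(T=1)+\mathbb{P}_1(T=0)$, and $R(T^* )=\inf_T R(T)$ is the optimal risk. *)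

(* Defs.v *)
From HB Require Import structures.
From mathcomp Require Import all_boot all_order all_algebra.
From mathcomp Require Import all_classical all_reals all_analysis.
Set Implicit Arguments. Unset Strict Implicit. Unset Printing Implicit Defensive.
Import Order.TTheory GRing.Theory Num.Theory.
Local Open Scope classical_set_scope.
Local Open Scope ring_scope.

Definition edge (n : nat) := {e : 'I_n * 'I_n | (e.1 < e.2)%N}.

(* An observation X = (X_e)_{e in E} is encoded as a #|E|.-tuple of reals,
   whose i-th coordinate is X_(enum_val i), i.e. coordinates are listed in
   the order [enum (edge n)]. The tuple type carries the product
   sigma-algebra (generated by the coordinate projections). *)
Definition nE (n : nat) := #|{: edge n}|.
Definition obs (R : realType) (n : nat) := (nE n).-tuple R.

(* Iterated integral w.r.t. a finite sequence of (independent) probability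
   measures: integrates f : seq R -> \bar R against mu_1 (x) ... (x) mu_m. *)
Fixpoint iter_int (R : realType) (mus : seq (probability R R))
    (f : seq R -> \bar R) : \bar R :=
  match mus with
  | [::] => f [::]
  | mu :: mus' => (\int[mu]_x iter_int mus' (fun s => f (x :: s)))%E
  end.

Definition obs_prob (R : realType) (n : nat) (mus : seq (probability R R))
    (A : set (obs R n)) : \bar R :=
  iter_int mus (fun s =>
    (\1_A (insubd (nseq_tuple (nE n) (0 : R)) s : obs R n))%:E).

Definition laws0 (R : realType) (n : nat) (P : probability R R) :=
  [seq P | e <- enum {: edge n}].

Definition lawsS (R : realType) (n : nat) (P Q : probability R R)
    (S : {set 'I_n}) :=
  [seq (if ((val e).1 \in S) && ((val e).2 \in S) then Q else P)
   | e <- enum {: edge n}].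

Definition P0 (R : realType) (n : nat) (P : probability R R)
    (A : set (obs R n)) : \bar R := obs_prob (laws0 n P) A.

Definition P1 (R : realType) (n k : nat) (P Q : probability R R)
    (A : set (obs R n)) : \bar R :=
  (((('C(n, k))%:R)^-1)%:E *
   \sum_(S : {set 'I_n} | #|S| == k) obs_prob (lawsS P Q S) A)%E.

(* Risk of a test T : R^{binom n 2} -> {0,1} (encoded as bool, true = 1). *)
Definition risk (R : realType) (n k : nat) (P Q : probability R R)
    (T : obs R n -> bool) : \bar R :=
  (@P0 R n P [set x | T x] + @P1 R n k P Q [set x | ~~ T x])%E.

Definition opt_risk (R : realType) (n k : nat) (P Q : probability R R)
    : \bar R :=
  ereal_inf [set @risk R n k P Q T | T in
              [set T : obs R n -> bool | measurable [set x | T x]]].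

(* Main.v *)
Require Import Defs.
From HB Require Import structures.
From mathcomp Require Import all_boot all_order all_algebra.
From mathcomp Require Import all_classical all_reals all_analysis.
From mathcomp Require Import ring lra.
Import Order.TTheory GRing.Theory Num.Theory.
Import measurable_realfun.
Set Implicit Arguments. Unset Strict Implicit.
Local Open Scope classical_set_scope.
Local Open Scope ring_scope.

Section Part1.
Variable R : realType.
Implicit Types mu : probability R R.

Lemma fine_prob mu (A : set R) : measurable A ->
  0 <= fine (mu A) <= 1 /\ mu A = (fine (mu A))%:E.
Proof.
move=> mA.
have h0 : (0 <= mu A)%E := measure_ge0 mu A.
have h1 : (mu A <= 1)%E := probability_le1 mu mA.
have hf : mu A \is a fin_num by rewrite ge0_fin_numE // (le_lt_trans h1) // ltry.
split; last by rewrite fineK.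
by rewrite fine_ge0 //= -lee_fin fineK.
Qed.

Definition piS (mus : seq (probability R R)) (a : R) :=
  \prod_(mu <- mus) fine (mu [set~ a]).

Lemma piS_01 mus a : 0 <= piS mus a <= 1.
Proof.
rewrite /piS; elim: mus => [|mu mus /andP[IH0 IH1]]; first by rewrite big_nil ler01 lexx.
have [/andP[h0 h1] _] := fine_prob mu (measurableC (measurable_set1 a)).
rewrite big_cons mulr_ge0 //=.
by rewrite -[X in _ <= X]mulr1; apply: ler_pM.
Qed.

Lemma int_two mu (a al be : R) : 0 <= al -> 0 <= be ->
  (\int[mu]_x (if x != a then al else be)%:E)%E =
  (al * fine (mu [set~ a]) + be * (1 - fine (mu [set~ a])))%:E.
Proof.
move=> hal hbe.
have mC : measurable [set~ a] := measurableC (measurable_set1 a).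
have m1 : measurable [set a] := measurable_set1 a.
have [_ eC] := fine_prob mu mC.
have e1 : mu [set a] = (1 - fine (mu [set~ a]))%:E.
  by rewrite -[X in mu X]setCK probability_setC // eC.
rewrite (eq_integral (fun x => (al * \1_[set~ a] x)%:E + (be * \1_[set a] x)%:E)%E); last first.
  move=> x _; rewrite /indic /=; case: (eqVneq x a) => [->|hx].
    have -> : (a \in [set a]) = true by apply/mem_set.
    have -> : (a \in [set~ a]) = false by apply/memNset => /=; apply.
    by rewrite /= mulr0 mulr1 add0e.
  have -> : (x \in [set a]) = false by apply/memNset => /= hxa; move/eqP: hx; apply.
  have -> : (x \in [set~ a]) = true by apply/mem_set => /= hxa; move/eqP: hx; apply.
  by rewrite /= mulr0 mulr1 adde0.
rewrite (ge0_integralD mu measurableT); last 4 first.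
- by move=> x _; rewrite lee_fin mulr_ge0.
- by apply/measurable_realfun.measurable_EFinP; apply: measurable_funM => //; exact: measurable_indic.
- by move=> x _; rewrite lee_fin mulr_ge0.
- by apply/measurable_realfun.measurable_EFinP; apply: measurable_funM => //; exact: measurable_indic.
rewrite (integralZl_indic _ (fun _ => [set~ a])) //; last by move=> /lt_geF; rewrite hal.
rewrite (integralZl_indic _ (fun _ => [set a])) //; last by move=> /lt_geF; rewrite hbe.
rewrite !integral_indic // !setIT.
transitivity ((al%:E * (fine (mu [set~ a]))%:E + be%:E * (1 - fine (mu [set~ a]))%:E)%E); first by rewrite -e1 -eC.
by rewrite -!EFinM -EFinD.
Qed.

Lemma iter_int_all mus a (u v : R) pre : 0 <= u -> 0 <= v ->
  iter_int mus (fun s => (if all (fun y => y != a) (pre ++ s) then u else v)%:E)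
  = (if all (fun y => y != a) pre then v + (u - v) * piS mus a else v)%:E.
Proof.
move=> hu hv; elim: mus pre => [|mu mus IH] pre /=.
  by rewrite cats0 /piS big_nil; case: ifP => _ //; congr (_%:E); ring.
have E x : iter_int mus (fun s => (if all (fun y => y != a) (pre ++ x :: s) then u else v)%:E)
  = (if all (fun y => y != a) (rcons pre x) then v + (u - v) * piS mus a else v)%:E.
  by rewrite -IH; congr iter_int; apply: funext => s; rewrite cat_rcons.
under eq_integral => x _ do rewrite E all_rcons.
case: (boolP (all (fun y => y != a) pre)) => hp; last first.
  under eq_integral => x _ do rewrite andbF.
  by rewrite integral_cst //= probability_setT mule1.
under eq_integral => x _ do rewrite andbT.
have /andP[p0 p1] := piS_01 mus a.
rewrite int_two //; last first.
  have -> : v + (u - v) * piS mus a = (1 - piS mus a) * v + piS mus a * u by ring.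
  by rewrite addr_ge0 // mulr_ge0 // subr_ge0.
by rewrite /piS big_cons; congr (_%:E); ring.
Qed.

Lemma iter_int_ext mus (f g : seq R -> \bar R) : (forall s, size s = size mus -> f s = g s) ->
  iter_int mus f = iter_int mus g.
Proof.
elim: mus f g => [|mu mus IH] f g H /=; first by apply: H.
apply: eq_integral => x _; apply: IH => s hs; apply: H => /=; by rewrite hs.
Qed.

End Part1.


Section Part2.
Variable R : realType.

Lemma obs_prob_bool n (mus : seq (probability R R)) (b : seq R -> bool) :
  size mus = nE n ->
  obs_prob mus [set x : obs R n | b x] =
  iter_int mus (fun s => (if b s then 1 else 0)%:E).
Proof.
move=> hs; rewrite /obs_prob; apply: iter_int_ext => s; rewrite hs => hsz.
rewrite /indic.
have hv : tval (insubd (nseq_tuple (nE n) (0:R)) s) = s.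
  by rewrite insubdK // unfold_in hsz.
case: (boolP (b s)) => h.
  by rewrite mem_set //= hv.
by rewrite memNset //= hv; apply/negP.
Qed.

Definition noa (a : R) (s : seq R) := all (fun y => y != a) s.

Lemma obs_prob_no n (mus : seq (probability R R)) (a : R) : size mus = nE n ->
  obs_prob mus [set x : obs R n | noa a x] = (piS mus a)%:E.
Proof.
move=> hs; rewrite obs_prob_bool //.
have := @iter_int_all R mus a 1 0 [::] ler01 (lexx 0).
rewrite /= subr0 add0r mul1r => <-; by [].
Qed.

Lemma obs_prob_some n (mus : seq (probability R R)) (a : R) : size mus = nE n ->
  obs_prob mus [set x : obs R n | ~~ noa a x] = (1 - piS mus a)%:E.
Proof.
move=> hs; rewrite (@obs_prob_bool n mus (fun s => ~~ noa a s)) //.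
have := @iter_int_all R mus a 0 1 [::] (lexx 0) ler01.
rewrite /= sub0r mulN1r => <-.
by congr iter_int; apply: funext => s; rewrite /noa; case: all.
Qed.
End Part2.


Section Part3.
Variable R : realType.
Variable w : nat -> R.
Hypothesis wpos : forall j, 0 < w j.
Hypothesis wle : forall j, w j <= 1 / (2 ^ j.+1)%:R.
Hypothesis w0 : w 0 = 1 / 2.

Let wge0 j : 0 <= w j. Proof. exact: ltW. Qed.

Definition mdisc : {measure set R -> \bar R} :=
  mseries (fun j => mscale (NngNum (wge0 j)) (@dirac _ R j%:R R)) 0.

Lemma mdiscE A : mdisc A = (\sum_(0 <= j <oo) (w j * \1_A (j%:R : R))%:E)%E.
Proof. by rewrite /mdisc /mseries; apply: eq_eseriesr => j _. Qed.

Let fge0 A j : (0 <= (w j * \1_A (j%:R : R))%:E)%E.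
Proof. by rewrite lee_fin mulr_ge0. Qed.

Lemma mdisc_le1 : (mdisc setT <= 1)%E.
Proof.
rewrite mdiscE.
apply: (@le_trans _ _ (\sum_(0 <= j <oo) (1 / (2 ^ (j + 1))%:R)%:E)%E).
  apply: lee_nneseries => [j _ _|j _]; first exact: fge0.
  by rewrite lee_fin indicT mulr1 addn1.
have := @cvg_geometric_eseries_half R 1 0.
rewrite expr0 divr1 => /cvg_lim => <- //.
Qed.

Lemma mdisc_ge A j : ((w j * \1_A (j%:R : R))%:E <= mdisc A)%E.
Proof.
rewrite mdiscE; apply: le_trans (nneseries_lim_ge j.+1 (fun n _ _ => fge0 A n)).
rewrite big_nat_recr //=; rewrite -[X in (X <= _)%E]add0e; apply: leeD => //.
by apply: sume_ge0 => k _; exact: fge0.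
Qed.

Lemma mdisc0 A : (forall j, ~ A (j%:R : R)) -> mdisc A = 0%E.
Proof.
move=> h; rewrite mdiscE; apply: eseries0 => j _ _.
by rewrite indicE memNset ?mulr0 //; exact: h.
Qed.

Lemma mdisc1 (a : nat) : mdisc [set (a%:R : R)] = (w a)%:E.
Proof.
rewrite mdiscE (nneseries_split 0 a.+1) => [|k _]; last exact: fge0.
rewrite eseries0 ?adde0 => [|k]; last first.
  rewrite add0n => hk _; rewrite indicE memNset ?mulr0 // => /= /eqP.
  by rewrite eqr_nat => /eqP hka; move: hk; rewrite hka ltnn.
rewrite add0n big_nat_recr //= big1_seq => [|k]; last first.
  rewrite mem_index_iota => /andP[_ hk]; rewrite indicE memNset ?mulr0 // => /= /eqP.
  by rewrite eqr_nat => /eqP hka; move: hk; rewrite hka ltnn.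
by rewrite add0e indicE mem_set // mulr1.
Qed.

Lemma mdisc_ge12 : ((1/2)%:E <= mdisc setT)%E.
Proof. by have := mdisc_ge setT 0; rewrite indicT mulr1 w0. Qed.

Definition cc := fine (mdisc setT).

Lemma cc_bounds : 1/2 <= cc <= 1.
Proof.
have h1 := mdisc_le1; have h2 := mdisc_ge12.
have hf : mdisc setT \is a fin_num.
  by rewrite ge0_fin_numE ?(le_lt_trans h1) ?ltry // (le_trans _ h2) // lee_fin.
by rewrite /cc -!lee_fin fineK // h1 h2.
Qed.

Definition Dw : probability R R := mnormalize mdisc (\d_(0:R)).

Lemma DwE A : Dw A = (mdisc A * (cc^-1)%:E)%E.
Proof.
rewrite /Dw /= /mnormalize.
have h1 := mdisc_le1; have h2 := mdisc_ge12.
case: ifPn => //; case/orP => /eqP h.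
  by move: h2; rewrite h leNgt lte_fin divr_gt0.
by move: h1; rewrite h leNgt ltry.
Qed.

Lemma Dw1 (a : nat) : fine (Dw [set (a%:R : R)]) = w a / cc.
Proof. by rewrite DwE mdisc1. Qed.

Lemma Dw1_bounds (a : nat) : w a <= fine (Dw [set (a%:R : R)]) <= 2 * w a.
Proof.
rewrite Dw1; have /andP[c1 c2] := cc_bounds.
have cpos : 0 < cc by apply: lt_le_trans c1; rewrite divr_gt0.
have := wpos a => wa.
rewrite ler_pdivlMr // ler_pdivrMr //.
apply/andP; split; nra.
Qed.

Lemma Dw0P A : measurable A -> Dw A = 0%E -> forall j, ~ A (j%:R : R).
Proof.
move=> mA h j Aj; have := mdisc_ge A j; rewrite indicE mem_set // mulr1.
have /andP[c1 _] := cc_bounds.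
have cpos : 0 < cc by apply: lt_le_trans c1; rewrite divr_gt0.
move: h; rewrite DwE.
have hf : mdisc A \is a fin_num.
  rewrite ge0_fin_numE // (le_lt_trans _ (ltry 1)) //.
  by apply: le_trans mdisc_le1; apply: le_measure => //; rewrite inE.
rewrite -(fineK hf) -EFinM => /eqP; rewrite eqe mulf_eq0 invr_eq0 (gt_eqF cpos) orbF.
move/eqP => ->; rewrite lee_fin leNgt wpos //.
Qed.

Lemma Dw0 A : (forall j, ~ A (j%:R : R)) -> Dw A = 0%E.
Proof. by move=> h; rewrite DwE mdisc0 // mul0e. Qed.

End Part3.


Section Part4.
Variable R : realType.

Lemma bern1 (p : R) (N : nat) : 0 <= p <= 1 -> 1 - (1 - p) ^+ N <= N%:R * p.
Proof.
move=> /andP[p0 p1]; elim: N => [|N IH]; first by rewrite expr0 subrr mul0r.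
have h0 : 0 <= (1 - p) ^+ N by rewrite exprn_ge0 // subr_ge0.
have h1 : (1 - p) ^+ N <= 1 by apply: exprn_ile1; lra.
rewrite exprS -natr1; nra.
Qed.

Lemma bern2 (q : R) (K : nat) : 0 <= q <= 1 -> (1 - q) ^+ K * (1 + K%:R * q) <= 1.
Proof.
move=> /andP[q0 q1]; elim: K => [|K IH]; first by rewrite expr0 mul0r addr0 mul1r.
have h0 : 0 <= (1 - q) ^+ K by rewrite exprn_ge0 // subr_ge0.
have hK : 0 <= K%:R :> R by [].
have hh : 0 <= (1 - q) ^+ K * (q * q * (K%:R + 1)) by rewrite mulr_ge0 // mulr_ge0 ?addr_ge0 // mulr_ge0.
rewrite exprS -natr1.
have -> : (1 - q) * (1 - q) ^+ K * (1 + (K%:R + 1) * q) =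
  (1 - q) ^+ K * (1 + K%:R * q) - (1 - q) ^+ K * (q * q * (K%:R + 1)) by ring.
lra.
Qed.

Lemma exp_mono (x : R) (m n : nat) : 0 <= x <= 1 -> (m <= n)%N -> x ^+ n <= x ^+ m.
Proof.
move=> /andP[x0 x1] /subnK <-; rewrite exprD ler_piMl // ?exprn_ge0 //.
exact: exprn_ile1.
Qed.

Lemma card_inS n (S : {set 'I_n}) :
  (#|S| - 1 <= #|[pred e : edge n | ((val e).1 \in S) && ((val e).2 \in S)]|)%N.
Proof.
case: (set_0Vmem S) => [->|[s0 hs0]]; first by rewrite cards0.
pose f (t : 'I_n) : 'I_n * 'I_n := if (s0 < t)%N then (s0, t) else (t, s0).
have finj : {in S :\ s0 &, injective f}.
  move=> t1 t2; rewrite !inE => /andP[h1 _] /andP[h2 _]; rewrite /f.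
  case: ltnP => l1; case: ltnP => l2 [] // e1 e2; subst; by rewrite ?eqxx in h1 h2.
rewrite (cardsD1 s0 S) hs0 add1n subn1 /=.
rewrite -(card_in_imset finj).
have fval t : t \in S :\ s0 -> ((f t).1 < (f t).2)%N && ((f t).1 \in S) && ((f t).2 \in S).
  rewrite !inE => /andP[ht1 ht2]; rewrite /f; case: (ltnP s0 t) => l /=.
    by rewrite l hs0 ht2.
  rewrite ht2 hs0 andbT andbT ltn_neqAle l andbT.
  by apply: contra ht1 => /eqP h; apply/eqP/val_inj.
set A := [pred e : edge n | ((val e).1 \in S) && ((val e).2 \in S)].
rewrite -(card_imset (mem A) val_inj); apply: subset_leq_card.
apply/fintype.subsetP => p /imsetP [t ht ->].
have := fval t ht => /andP[/andP[h1 h2] h3].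
apply/imsetP; exists (exist _ (f t) h1 : edge n) => //.
by rewrite inE /= h2 h3.
Qed.

End Part4.


Section Part5.
Variable R : realType.

Lemma pi01 (mu : probability R R) (a : R) : 0 <= fine (mu [set~ a]) <= 1.
Proof. by have [] := fine_prob mu (measurableC (measurable_set1 a)). Qed.

Lemma size_laws0 n (P : probability R R) : size (laws0 n P) = nE n.
Proof. by rewrite size_map -cardE. Qed.

Lemma size_lawsS n (P Q : probability R R) (S : {set 'I_n}) : size (lawsS P Q S) = nE n.
Proof. by rewrite size_map -cardE. Qed.

Lemma piS_laws0 n (P : probability R R) a :
  piS (laws0 n P) a = fine (P [set~ a]) ^+ nE n.
Proof. by rewrite /piS big_map big_enum /= prodr_const. Qed.

Lemma piS_lawsS n (P Q : probability R R) (S : {set 'I_n}) a :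
  piS (lawsS P Q S) a <= fine (Q [set~ a]) ^+ (#|S| - 1).
Proof.
rewrite /piS big_map big_enum /=.
set c := fun e : edge n => ((val e).1 \in S) && ((val e).2 \in S).
rewrite (bigID c) /=.
under eq_bigr => e ce do rewrite (ce : (_ && _)).
under [X in _ * X <= _]eq_bigr => e ce do rewrite (negbTE (ce : ~~ (_ && _))).
apply: (@le_trans _ _ (\prod_(e | c e) fine (Q [set~ a]))).
  rewrite -[X in _ <= X]mulr1; apply: ler_pM.
  - by apply: prodr_ge0 => e _; have /andP[] := pi01 Q a.
  - by apply: prodr_ge0 => e _; have /andP[] := pi01 P a.
  - by [].
  - by apply: prodr_ile1 => e _; exact: pi01.
rewrite prodr_const; apply: exp_mono; first exact: pi01.
exact: card_inS.
Qed.

Lemma risk_bound n k (P Q : probability R R) (a : R) : (k <= n)%N ->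
  (risk k P Q (fun x : obs R n => ~~ noa a x) <=
   (1 - fine (P [set~ a]) ^+ nE n + fine (Q [set~ a]) ^+ (k - 1))%:E)%E.
Proof.
move=> hkn; rewrite /risk /P0 obs_prob_some ?size_laws0 // piS_laws0 EFinD.
rewrite -EFinD; rewrite [in X in (_ <= X)%E]EFinD; apply: leeD => //.
have -> : [set x : obs R n | ~~ ~~ noa a x] = [set x | noa a x].
  by apply/seteqP; split => x /=; rewrite negbK.
rewrite /P1.
under eq_bigr => S _ do rewrite obs_prob_no ?size_lawsS //.
rewrite sumEFin -EFinM lee_fin.
have hc : #|[pred S : {set 'I_n} | #|S| == k]| = 'C(n, k).
  by rewrite -cardsE card_draws card_ord.
have Cpos : (0 < 'C(n, k))%N by rewrite bin_gt0.
apply: (@le_trans _ _ (('C(n, k)%:R)^-1 * \sum_(S : {set 'I_n} | #|S| == k) fine (Q [set~ a]) ^+ (k - 1))).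
  apply: ler_wpM2l; first by rewrite invr_ge0.
  apply: ler_sum => S /eqP hS; rewrite -hS; exact: piS_lawsS.
rewrite sumr_const hc -[X in _ * X](mulr_natr). rewrite mulrCA mulVf ?mulr1 //.
by rewrite pnatr_eq0 -lt0n.
Qed.

Lemma meas_test n (a : R) : measurable [set x : obs R n | ~~ noa a x].
Proof.
have -> : [set x : obs R n | ~~ noa a x] =
   ~` \bigcap_(i in [set: 'I_(nE n)]) ([set: obs R n] `&` (fun x : obs R n => tnth x i) @^-1` [set~ a]).
  apply/seteqP; split => x /=.
    move=> hx hall; move/negP: hx; apply; apply/all_tnthP => i.
    by have [_ /= /eqP] := hall i I.
  move=> hx; apply/negP => hall; apply: hx => i _; split => //=.
  by move/all_tnthP: hall => /(_ i) /eqP.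
apply: measurableC; apply: fin_bigcap_measurable; first exact: finite_finset.
move=> i _; apply: measurable_tnth => //; exact: measurableC (measurable_set1 a).
Qed.

Lemma iter_int_ge0 (mus : seq (probability R R)) (f : seq R -> \bar R) :
  (forall s, (0 <= f s)%E) -> (0 <= iter_int mus f)%E.
Proof.
elim: mus f => [|mu mus IH] f hf /=; first exact: hf.
by apply: integral_ge0 => x _; apply: IH.
Qed.

Lemma risk_ge0 n k (P Q : probability R R) (T : obs R n -> bool) :
  (0 <= risk k P Q T)%E.
Proof.
have h mus A : (0 <= @obs_prob R n mus A)%E.
  by apply: iter_int_ge0 => s; rewrite lee_fin.
apply: adde_ge0; first exact: h.
apply: mule_ge0; first by rewrite lee_fin invr_ge0.
by apply: sume_ge0 => S _; exact: h.
Qed.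

End Part5.


Lemma nE_le n : (nE n <= n * n)%N.
Proof.
rewrite /nE card_sig; apply: leq_trans (max_card _) _; by rewrite card_prod card_ord.
Qed.

Lemma sq_le4 n : (n * n <= 4 ^ n)%N.
Proof.
have h : (n <= 2 ^ n)%N by apply: ltnW; apply: ltn_expl.
by rewrite (_ : 4 = 2 * 2)%N // expnMn leq_mul.
Qed.

Lemma pi_compl (R : realType) (mu : probability R R) (x : R) :
  fine (mu [set~ x]) = 1 - fine (mu [set x]).
Proof.
rewrite probability_setC; last exact: measurable_set1.
have [_ e] := fine_prob mu (measurable_set1 x).
by rewrite e.
Qed.

Lemma real_bound (R : realType) (N K : nat) (p q x y : R) :
  0 <= p <= 1 -> 0 <= q <= 1 -> 1 <= x -> 0 < y ->
  N%:R <= y -> p <= 2 * (1 / (2 * x * y)) -> 1 <= 2 * x * q -> x * x - 1 <= K%:R ->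
  1 - (1 - p) ^+ N + (1 - q) ^+ K <= 3 * (1 / x).
Proof.
move=> hp hq x1 y0 hN hpb hqb hK.
have x0 : 0 < x by lra.
have b1 := bern1 N hp.
have b2 := bern2 K hq.
have z0 : 0 <= (1 - q) ^+ K by rewrite exprn_ge0 //; lra.
have e1 : N%:R * p <= 1 / x.
  apply: (le_trans (ler_wpM2l (ler0n _ N) hpb)).
  have -> : N%:R * (2 * (1 / (2 * x * y))) = N%:R / y * (1 / x) by field; lra.
  rewrite -[X in _ <= X]mul1r ler_wpM2r ?divr_ge0 ?ler_pdivrMr ?mul1r //; lra.
have e2 : (1 - q) ^+ K <= 2 / x.
  rewrite ler_pdivlMr //.
  set z := (1 - q) ^+ K in b2 z0 *.
  have hK0 : 0 <= K%:R :> R by [].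
  have h1 : x <= 2 * (1 + K%:R * q).
    have : K%:R * 1 <= K%:R * (2 * x * q) by apply: ler_wpM2l.
    nra.
  nra.
lra.
Qed.

Theorem mainTheorem3 (R : realType) (k : nat -> nat) :
  (forall n : nat, (2 <= n)%N -> (2 <= k n <= n)%N) ->
  (forall M : nat, exists N : nat, forall n : nat, (N <= n)%N -> (M <= k n)%N) ->
  exists P Q : probability R R,
    P `<< Q /\ Q `<< P /\
    (fun n => opt_risk n (k n) P Q) @ \oo --> 0%E.
Proof.
move=> Hk Hinf.
have [Nf HNf] := choice Hinf.
pose L i := Nf (4 ^ i.+1)%N.
pose wQ (j : nat) : R := 1 / (2 ^ j.+1)%:R.
pose wP (j : nat) : R := 1 / (2 ^ j.+1 * 4 ^ (j * L j))%:R.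
have wQpos j : 0 < wQ j by rewrite divr_gt0 // ltr0n expn_gt0.
have wPpos j : 0 < wP j by rewrite divr_gt0 // ltr0n muln_gt0 !expn_gt0.
have wQle j : wQ j <= 1 / (2 ^ j.+1)%:R by [].
have wPle j : wP j <= 1 / (2 ^ j.+1)%:R.
  rewrite /wP !div1r lef_pV2 ?posrE ?ltr0n ?muln_gt0 ?expn_gt0 // ler_nat.
  by rewrite leq_pmulr // expn_gt0.
have wQ0 : wQ 0 = 1 / 2 by [].
have wP0 : wP 0 = 1 / 2 by rewrite /wP mul0n expn0 muln1.
pose P := Dw wPpos. pose Q := Dw wQpos.
exists P, Q; split; [|split].
- move=> N hN A mA hAN; apply: (Dw0 wPpos wPle wP0) => j.
  exact: (Dw0P wQle wQ0 mA (hN A mA hAN)).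
- move=> N hN A mA hAN; apply: (Dw0 wQpos wQle wQ0) => j.
  exact: (Dw0P wPle wP0 mA (hN A mA hAN)).
pose i n := trunc_log 4 (k n).
have key n : (2 <= n)%N -> (1 <= i n)%N ->
    (opt_risk n (k n) P Q <= (3 * (1 / 2 ^+ i n))%:E)%E.
  move=> hn ha; set a := i n in ha *.
  have /andP[k2 kn] := Hk n hn.
  have ka : (4 ^ a <= k n)%N by apply: trunc_logP => //; apply: leq_trans k2.
  have ka1 : (k n < 4 ^ a.+1)%N by apply: trunc_log_ltn.
  have nL : (n < L a)%N.
    by rewrite ltnNge; apply/negP => /HNf; rewrite leqNgt ka1.
  apply: (@le_trans _ _ (risk (k n) P Q (fun x : obs R n => ~~ noa (a%:R : R) x))).
    apply: ereal_inf_lbound; exists (fun x : obs R n => ~~ noa (a%:R : R) x) => //.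
    exact: meas_test.
  apply: le_trans (risk_bound P Q (a%:R : R) kn) _.
  rewrite lee_fin !pi_compl.
  have [hp _] := fine_prob P (measurable_set1 (a%:R : R)).
  have [hq _] := fine_prob Q (measurable_set1 (a%:R : R)).
  have /andP[_ pb] := Dw1_bounds wPpos wPle wP0 a.
  have /andP[qb _] := Dw1_bounds wQpos wQle wQ0 a.
  apply: (real_bound (y := (4 ^ (a * L a))%:R) hp hq).
  - by rewrite exprn_ege1 // ler1n.
  - by rewrite ltr0n expn_gt0.
  - rewrite ler_nat; apply: leq_trans (nE_le n) _; apply: leq_trans (sq_le4 n) _.
    rewrite leq_pexp2l //; apply: leq_trans (ltnW nL) _; exact: leq_pmull.
  - apply: le_trans pb _; rewrite /wP natrM natrX exprS.
    by [].
  - apply: le_trans (_ : 2 * 2 ^+ a * wQ a <= _).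
      by rewrite /wQ natrX exprS div1r mulfV // mulf_neq0 // expf_neq0.
    by apply: ler_wpM2l => //; rewrite mulr_ge0 // exprn_ge0.
  - rewrite natrB; last by apply: leq_trans k2.
    rewrite lerD2r -natrX -natrM ler_nat -expnMn.
    by rewrite (_ : 2 * 2 = 4)%N.
apply: (@squeeze_cvge _ _ _ _ (cst 0%E) _ (fun n => (3 * (1 / 2 ^+ i n))%:E)).
- exists (maxn 2 (Nf 4)) => // n /= hn.
  have hn2 : (2 <= n)%N by apply: leq_trans hn; exact: leq_maxl.
  have hi : (1 <= i n)%N.
    apply: trunc_log_max => //; rewrite expn1; apply: HNf.
    by apply: leq_trans hn; exact: leq_maxr.
  rewrite key // andbT.
  apply/ereal_infP => y [T _ <-]; exact: risk_ge0.
- exact: cvg_cst.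
- apply: cvg_EFin; first by apply: nearW.
  apply/cvgrPdist_lt => e e0.
  have e3 : 0 < e / 3 by rewrite divr_gt0.
  have [I0 _ HI0] := near_infty_natSinv_expn_lt (PosNum e3).
  exists (Nf (4 ^ I0)%N) => // n /= hn.
  have hI : (I0 <= i n)%N by apply: trunc_log_max => //; apply: HNf.
  have := HI0 _ hI; rewrite /= => h.
  have h0 : 0 <= 1 / 2 ^+ i n :> R by rewrite divr_ge0 // exprn_ge0.
  rewrite sub0r normrN ger0_norm; last by rewrite mulr_ge0.
  lra.
Qed.
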